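(* Let $n\ge 13$ and let $T^*$ be a chemical tree on $n$ vertices with maximum degree $\Delta(T^* )=3$ and at least $3$ vertices of degree $3$. Let $\Omega(n)$ be the set of chemical trees $T$ on $n$ vertices having $3$ vertices of degree $3$, $n-8$ vertices of degree $2$ and $5$ vertices of degree $1$, with $m_{1,2}(T)=m_{2,3}(T)=5$, $m_{1,3}(T)=0$, $m_{3,3}(T)=2$ and $m_{2,2}(T)=n-13$. If $T^*\notin\Omega(n)$, then there exists $T\in\Omega(n)$ such that $SO(T)<SO(T^* )$ and $SO_{red}(T)<SO_{red}(T^* )$.
   Context: A chemical tree is a tree with maximum degree at most $4$. $d_G(u)$ is the degree of $u$ and $m_{i,j}(G)$ is the number of edges joining a vertex of degree $i$ to a vertex of degree $j$. $SO(G)=\sum_{uv\in E(G)}\sqrt{d_G(u)^2+d_G(v)^2}$ and $SO_{red}(G)=\sum_{uv\in E(G)}\sqrt{(d_G(u)-1)^2+(d_G(v)-1)^2}$. *)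

(* Defs.v *)
From HB Require Import structures.
From mathcomp Require Import all_boot all_order all_algebra.
From mathcomp Require Import reals.
Set Implicit Arguments. Unset Strict Implicit. Unset Printing Implicit Defensive.
Import Order.TTheory GRing.Theory Num.Theory.

Section Graphs.
Variable n : nat.
Implicit Types (e : rel 'I_n).

Definition simple_graph e : Prop := symmetric e /\ irreflexive e.

Definition deg e (v : 'I_n) : nat := #|[set u | e v u]|.

(* edges are listed once, as ordered pairs (u,v) with u < v *)
Definition is_edge e (p : 'I_n * 'I_n) : bool := (val p.1 < val p.2)%N && e p.1 p.2.

Definition num_edges e : nat := #|[set p | is_edge e p]|.

Definition is_tree e : Prop :=
  simple_graph e /\ (forall u v, connect e u v) /\ num_edges e = n.-1.

Definition chemical_tree e : Prop := is_tree e /\ forall v, (deg e v <= 4)%N.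

Definition max_deg e : nat := \max_(v : 'I_n) deg e v.

Definition num_deg e (k : nat) : nat := #|[set v | deg e v == k]|.

Definition medges e (i j : nat) : nat :=
  #|[set p | is_edge e p &&
       (((deg e p.1 == i) && (deg e p.2 == j)) ||
        ((deg e p.1 == j) && (deg e p.2 == i)))]|.

Local Open Scope ring_scope.

Definition SO (R : realType) e : R :=
  \sum_(p : 'I_n * 'I_n | is_edge e p)
     Num.sqrt ((deg e p.1)%:R ^+ 2 + (deg e p.2)%:R ^+ 2).

Definition SO_red (R : realType) e : R :=
  \sum_(p : 'I_n * 'I_n | is_edge e p)
     Num.sqrt (((deg e p.1)%:R - 1) ^+ 2 + ((deg e p.2)%:R - 1) ^+ 2).

Definition in_Omega e : Prop :=
  chemical_tree e /\
  num_deg e 3 = 3%N /\ num_deg e 2 = (n - 8)%N /\ num_deg e 1 = 5%N /\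
  medges e 1 2 = 5%N /\ medges e 2 3 = 5%N /\ medges e 1 3 = 0%N /\
  medges e 3 3 = 2%N /\ medges e 2 2 = (n - 13)%N.

End Graphs.

(* Main.v *)
Require Import Defs.
From HB Require Import structures.
From mathcomp Require Import all_boot all_order all_algebra.
From mathcomp Require Import reals.
From mathcomp Require Import zify ring lra.
Import Order.TTheory GRing.Theory Num.Theory.

Lemma card_ord_count n (P : pred nat) :
  #|[set v : 'I_n | P (val v)]| = count P (iota 0 n).
Proof.
rewrite -val_enum_ord count_map cardsE cardE /enum_mem size_filter.
rewrite (@eq_filter _ _ predT) ?filter_predT //.
Qed.

Section Gen.
Variable n : nat.
Variable e : rel 'I_n.
Hypothesis hsym : symmetric e.
Hypothesis hirr : irreflexive e.

Local Open Scope ring_scope.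

Lemma handshake (V : nmodType) (phi : nat -> V) :
  \sum_(p : 'I_n * 'I_n | is_edge e p) (phi (deg e p.1) + phi (deg e p.2)) =
  \sum_(v : 'I_n) phi (deg e v) *+ deg e v.
Proof.
have -> : \sum_(v : 'I_n) phi (deg e v) *+ deg e v =
          \sum_(v : 'I_n) \sum_(u | e v u) phi (deg e v).
  apply: eq_bigr => v _; rewrite sumr_const /deg; congr (_ *+ _).
  by apply: eq_card => u; rewrite inE.
rewrite pair_big_dep /= [RHS](bigID (fun p : 'I_n * 'I_n => (val p.1 < val p.2)%N)) /=.
rewrite big_split /=; congr (_ + _).
  by apply: eq_bigl => p; rewrite /is_edge andbC.
rewrite (reindex_inj (h := fun p : 'I_n * 'I_n => (p.2, p.1))); last first.
  by move=> [a b] [c d] /= [-> ->].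
apply: eq_bigl => [[a b]] /=; rewrite /is_edge /= hsym.
case: (boolP (e a b)) => hab; rewrite ?andbF ?andbT //=.
have hne : val a != val b.
  by apply: contraTneq hab => /val_inj ->; rewrite hirr.
by rewrite ltnNge leq_eqVlt (negbTE hne).
Qed.


Definition mt (i j : nat) (p : 'I_n * 'I_n) : bool :=
  ((deg e p.1 == i) && (deg e p.2 == j)) || ((deg e p.1 == j) && (deg e p.2 == i)).

Lemma medges_sum i j : medges e i j = (\sum_(p | is_edge e p) (mt i j p : nat))%R.
Proof.
rewrite /medges cardsE -sum1_card big_mkcondr /=.
apply: eq_bigr => p _; rewrite /mt; by case: ifP.
Qed.

Lemma num_deg_sum i : num_deg e i = (\sum_(v : 'I_n) (deg e v == i : nat))%R.
Proof.
rewrite /num_deg cardsE -sum1_card big_mkcond /=.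
apply: eq_bigr => v _ /=. rewrite /in_mem /=. change (deg e v == i) with (eqn (deg e v) i). by case: eqn.
Qed.

Hypothesis hdeg : forall v, (1 <= deg e v <= 3)%N.

Lemma edge_sum (V : nmodType) (F : nat -> nat -> V)
  (Fsym : forall i j, F i j = F j i) :
  \sum_(p : 'I_n * 'I_n | is_edge e p) F (deg e p.1) (deg e p.2) =
  F 1 1 *+ medges e 1 1 + F 1 2 *+ medges e 1 2 + F 1 3 *+ medges e 1 3 +
  F 2 2 *+ medges e 2 2 + F 2 3 *+ medges e 2 3 + F 3 3 *+ medges e 3 3.
Proof.
rewrite !medges_sum -!sumrMnr -!big_split /=.
apply: eq_bigr => p _; rewrite /mt.
move: (hdeg p.1) (hdeg p.2).
case: (deg e p.1) => [|[|[|[|a]]]] //= _; case: (deg e p.2) => [|[|[|[|b]]]] //= _;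
  rewrite ?mulr0n ?mulr1n ?add0r ?addr0 //.
Qed.

Lemma vertex_sum (V : nmodType) (G : nat -> V) :
  \sum_(v : 'I_n) G (deg e v) =
  G 1 *+ num_deg e 1 + G 2 *+ num_deg e 2 + G 3 *+ num_deg e 3.
Proof.
rewrite !num_deg_sum -!sumrMnr -!big_split /=.
apply: eq_bigr => v _.
move: (hdeg v).
case: (deg e v) => [|[|[|[|a]]]] //= _; rewrite ?mulr0n ?mulr1n ?add0r ?addr0 //.
Qed.

End Gen.

Section Conn.
Variable n : nat.
Variable e : rel 'I_n.
Hypothesis hsym : symmetric e.
Hypothesis hirr : irreflexive e.
Hypothesis hconn : forall u v, connect e u v.

Lemma deg_pos : (1 < n)%N -> forall v, (0 < deg e v)%N.
Proof.
move=> hn v.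
have : (0 < #|[set~ v]|)%N by rewrite cardsC1 card_ord; case: n hn => [|[|]].
case/card_gt0P => w; rewrite !inE => hwv.
move: (hconn v w) => /connectP [[|x p]] /=.
  by move=> _ hw; move: hwv; rewrite hw eqxx.
case/andP => hvx _ _; apply/card_gt0P; exists x; by rewrite inE.
Qed.

Lemma closed_path (C : {set 'I_n}) :
  (forall x y, x \in C -> e x y -> y \in C) ->
  forall p x, path e x p -> x \in C -> last x p \in C.
Proof.
move=> hC; elim => [|y p IH] x //= /andP [hxy hp] hx.
by apply: IH => //; apply: hC hxy.
Qed.

Lemma deg1_nb x y z : deg e x = 1%N -> e x y -> e x z -> z = y.
Proof.
move=> hd hy hz.
have /cards1P [w hw] : #|[set u | e x u]| == 1%N by rewrite -/(deg e x) hd.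
have : y \in [set u | e x u] by rewrite inE.
have : z \in [set u | e x u] by rewrite inE.
by rewrite hw !inE => /eqP -> /eqP ->.
Qed.

Lemma m11_0 : (2 < n)%N -> medges e 1 1 = 0%N.
Proof.
move=> hn; apply/eqP; rewrite cards_eq0; apply/eqP/setP => [[a b]].
rewrite !inE /is_edge /= orbb; apply/negP => /andP [/andP [_ hab] /andP [/eqP ha /eqP hb]].
have hba : e b a by rewrite hsym.
pose C := [set a; b].
have hC : forall x y, x \in C -> e x y -> y \in C.
  move=> x y; rewrite !inE => /orP [] /eqP -> hxy.
    by rewrite (deg1_nb _ _ _ ha hab hxy) eqxx orbT.
  by rewrite (deg1_nb _ _ _ hb hba hxy) eqxx.
have : (0 < #|~: C|)%N.
  rewrite cardsCs setCK card_ord; have := cards2 a b.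
  have : (#|C| <= 2)%N by rewrite cards2; case: (a != b).
  lia.
case/card_gt0P => w; rewrite inE => hw.
move: (hconn a w) => /connectP [p hp hl].
move: hw; rewrite hl closed_path //; by rewrite !inE eqxx.
Qed.

End Conn.

Section Forest.
Variable n : nat.
Variable e : rel 'I_n.
Hypothesis hsym : symmetric e.
Hypothesis hirr : irreflexive e.
Hypothesis hconn : forall u v, connect e u v.
Hypothesis hedges : num_edges e = n.-1.
Variable r : 'I_n.

Fixpoint reach (k : nat) (v : 'I_n) : bool :=
  if k is k'.+1 then reach k' v || [exists w, e v w && reach k' w] else v == r.

Lemma reach_path p v : path e v p -> last v p = r -> reach (size p) v.
Proof.
elim: p v => [|w p IH] v /=; first by move=> _ ->.
case/andP => hvw hp hl; apply/orP; right; apply/existsP; exists w.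
by rewrite hvw IH.
Qed.

Lemma ex_reach v : exists k, reach k v.
Proof.
move: (hconn v r) => /connectP [p hp hl]; exists (size p).
exact: reach_path.
Qed.

Definition dist v := ex_minn (ex_reach v).

Lemma dist_step v : v != r -> exists w, e v w && (dist w < dist v)%N.
Proof.
move=> hv; rewrite /dist; case: ex_minnP => k hk hmin.
case: k hk hmin => [|k] /=; first by rewrite (negbTE hv).
move=> /orP [hk hmin|/existsP [w /andP [hvw hw]] hmin].
  by have := hmin _ hk; rewrite ltnn.
exists w; rewrite hvw /=; case: ex_minnP => j hj hminj.
by rewrite ltnS; apply: hminj.
Qed.

Definition par v := if [pick w | e v w && (dist w < dist v)%N] is Some w then w else v.

Lemma par_spec v : v != r -> e v (par v) && (dist (par v) < dist v)%N.
Proof.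
move=> hv; rewrite /par; case: pickP => [w //|h0].
by case: (dist_step _ hv) => w hw; move: (h0 w); rewrite hw.
Qed.

Definition edge_of v : 'I_n * 'I_n :=
  if (val v < val (par v))%N then (v, par v) else (par v, v).

Definition ch (p : 'I_n * 'I_n) := if (dist p.1 < dist p.2)%N then p.2 else p.1.

Lemma ch_edge v : v != r -> ch (edge_of v) = v.
Proof.
move=> /par_spec /andP [_ hd]; rewrite /edge_of.
case: ifP => _; rewrite /ch /=; last by rewrite hd.
by rewrite ltnNge (ltnW hd).
Qed.

Lemma edge_of_edge v : v != r -> is_edge e (edge_of v).
Proof.
move=> /par_spec /andP [he _]; rewrite /edge_of /is_edge.
case: ifP => h /=; first by rewrite h he.
rewrite hsym he andbT ltn_neqAle leqNgt h andbT.
by apply: contraTneq he => /val_inj ->; rewrite hirr.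
Qed.

Lemma edges_image :
  [set p | is_edge e p] = [set edge_of v | v in [set~ r]].
Proof.
apply/eqP; rewrite eq_sym eqEcard; apply/andP; split.
  by apply/subsetP => p /imsetP [v]; rewrite !inE => hv ->; apply: edge_of_edge.
rewrite card_in_imset; last first.
  move=> u v; rewrite !inE => hu hv heq.
  by rewrite -(ch_edge _ hu) heq ch_edge.
by rewrite cardsC1 card_ord -hedges.
Qed.

Lemma forest_bound (S : {set 'I_n}) : r \in S ->
  (#|[set p | is_edge e p && (p.1 \in S) && (p.2 \in S)]| < #|S|)%N.
Proof.
move=> hr.
set ES := [set p | _].
have hE : forall p, p \in ES -> exists2 v, v != r & p = edge_of v.
  move=> p; rewrite inE => /andP [/andP [hp _] _].
  move: hp; rewrite -inE.
  have -> : (p \in [set p | is_edge e p]) = (p \in [set p : 'I_n * 'I_n | is_edge e p]) by [].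
  rewrite edges_image => /imsetP [v]; rewrite !inE => hv ->; by exists v.
have hinj : {in ES &, injective ch}.
  move=> p q hp hq; case: (hE p hp) => u hu ->; case: (hE q hq) => v hv ->.
  by rewrite !ch_edge // => ->.
rewrite -(card_in_imset hinj) (cardsD1 r S) hr add1n ltnS.
apply: subset_leq_card; apply/subsetP => x /imsetP [p hp ->].
case: (hE p hp) => v hv hpv.
move: hp; rewrite inE hpv ch_edge // !inE hv /=.
rewrite /edge_of; case: ifP => _ /=; by case/andP => /andP [_ ? ] ?.
Qed.

End Forest.

Lemma mulrn_nat (x k : nat) : (x *+ k)%R = (x * k)%N.
Proof. by elim: k => [|k IH]; rewrite ?muln0 // mulrS IH mulnS. Qed.

Lemma sum_edges1 n (e : rel 'I_n) :
  (\sum_(p : 'I_n * 'I_n | is_edge e p) (1 : nat))%R = num_edges e.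
Proof.
rewrite /num_edges cardsE -sum1_card; apply: eq_bigr => //.
Qed.

Lemma sum_verts1 n :
  (\sum_(v : 'I_n) (1 : nat))%R = n.
Proof. by rewrite -[RHS]card_ord -sum1_card. Qed.

Section Ids.
Variable n : nat.
Variable e : rel 'I_n.
Hypothesis hn : (2 < n)%N.
Hypothesis htree : is_tree e.
Hypothesis hdeg3 : forall v, (deg e v <= 3)%N.

Lemma hdeg : forall v, (1 <= deg e v <= 3)%N.
Proof.
case: htree => [[hsym hirr] [hconn _]] v.
by rewrite hdeg3 andbT (@deg_pos _ _ hconn) // ltnW.
Qed.

Lemma tree_ids :
  [/\ medges e 1 1 = 0%N,
      (medges e 1 2 + medges e 1 3 = num_deg e 1)%N,
      (medges e 1 2 + 2 * medges e 2 2 + medges e 2 3 = 2 * num_deg e 2)%N,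
      (medges e 1 3 + medges e 2 3 + 2 * medges e 3 3 = 3 * num_deg e 3)%N &
      ((medges e 1 2 + medges e 1 3 + medges e 2 2 + medges e 2 3 + medges e 3 3 = n.-1)%N /\
      (num_deg e 1 + num_deg e 2 + num_deg e 3 = n)%N)].
Proof.
case: htree => [[hsym hirr] [hconn hedges]].
have h11 := @m11_0 _ _ hsym hconn hn.
have HS := @handshake _ _ hsym hirr.
have ES := @edge_sum _ _ hdeg.
have VS := @vertex_sum _ _ hdeg.
have key : forall i, 
  ((((1 == i) + (1 == i)) * medges e 1 1 + ((1 == i) + (2 == i)) * medges e 1 2 +
   ((1 == i) + (3 == i)) * medges e 1 3 + ((2 == i) + (2 == i)) * medges e 2 2 +
   ((2 == i) + (3 == i)) * medges e 2 3 + ((3 == i) + (3 == i)) * medges e 3 3) =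
  (1 == i) * 1 * num_deg e 1 + (2 == i) * 2 * num_deg e 2 + (3 == i) * 3 * num_deg e 3)%N.
  move=> i.
  have := HS nat (fun d => (d == i : nat)).
  rewrite (ES nat (fun a b => (a == i : nat) + (b == i))); last by move=> a b; rewrite addnC.
  rewrite (VS nat (fun d => ((d == i : nat) *+ d)%R)).
  by rewrite !mulrn_nat.
split => //.
- by have := key 1%N; rewrite h11 /=; lia.
- by have := key 2%N; rewrite h11 /=; lia.
- by have := key 3%N; rewrite h11 /=; lia.
split.
- have := ES nat (fun _ _ => 1%N) (fun _ _ => erefl).
  rewrite sum_edges1 hedges !mulrn_nat h11; lia.
- have := VS nat (fun _ => 1%N).
  rewrite sum_verts1 !mulrn_nat; lia.
Qed.

End Ids.

Definition parN (v : nat) : nat := if v \in [:: 5; 8; 11] then v - 3 else v.-1.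

Definition eN (u v : nat) : bool :=
  ((0 < v) && (u == parN v)) || ((0 < u) && (v == parN u)).

Definition dT (n v : nat) : nat :=
  if v \in [:: 2; 5; 8] then 3 else if v \in [:: 0; 4; 7; 10] then 1
  else if (11 < v) && (v.+1 == n) then 1 else 2.

Lemma parN_lt {v} : 0 < v -> parN v < v.
Proof. rewrite /parN !inE; case: ifP => [/orP [/eqP ->|/orP [/eqP ->|/eqP ->]]|] //; lia. Qed.

Lemma parN_le v : parN v <= v.
Proof. rewrite /parN; case: ifP => _; lia. Qed.

Lemma parN_big {v} : 12 <= v -> parN v = v.-1.
Proof. move=> h; rewrite /parN !inE; case: ifP => //; lia. Qed.

Lemma dT3 n v : (dT n v == 3) = (v \in [:: 2; 5; 8]).
Proof. rewrite /dT; case: ifP => // _; case: ifP => // _; by case: ifP. Qed.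

Lemma count_split13 n (P : pred nat) : 13 <= n ->
  (forall u, 13 <= u -> P u = false) -> count P (iota 0 n) = count P (iota 0 13).
Proof.
move=> hn hP; rewrite -(subnKC hn) iotaD count_cat.
suff -> : count P (iota (0 + 13) (n - 13)) = 0 by rewrite addn0.
apply/eqP; rewrite -leqn0 leqNgt -has_count; apply/hasPn => u.
by rewrite mem_iota => /andP [h _]; rewrite hP.
Qed.

Section Tcons.
Variable n : nat.
Hypothesis hn : 13 <= n.

Definition T : rel 'I_n := fun u v => eN u v.

Lemma T_sym : symmetric T.
Proof. by move=> u v; rewrite /T /eN orbC. Qed.

Lemma T_irr : irreflexive T.
Proof.
move=> u; rewrite /T /eN orbb; apply/negP => /andP [h /eqP h2].
by move: (parN_lt h); rewrite -h2 ltnn.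
Qed.

Lemma is_edge_T (p : 'I_n * 'I_n) :
  is_edge T p = (0 < val p.2) && (val p.1 == parN p.2).
Proof.
rewrite /is_edge /T /eN; case: p => [a b] /=.
case: (boolP ((0 < val b) && (val a == parN b))) => h.
  by case/andP: h => hb /eqP ->; rewrite parN_lt.
apply/negP => /andP [hab /andP [ha /eqP hb]].
by move: (parN_lt ha); rewrite -hb; lia.
Qed.

Definition parO (v : 'I_n) : 'I_n := Ordinal (leq_ltn_trans (parN_le v) (ltn_ord v)).

Definition r0 : 'I_n := Ordinal (leq_trans (isT : 0 < 13) hn).

Lemma T_conn u v : connect T u v.
Proof.
suff H : forall k (v : 'I_n), val v <= k -> connect T r0 v.
  apply: (connect_trans (y := r0)); last exact: H (leqnn _).
  by rewrite (sym_connect_sym T_sym); exact: H (leqnn _).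
elim => [|k IH] [w hwn] /= hw.
  by have -> : Ordinal hwn = r0 by apply: val_inj => /=; lia.
case: (posnP w) => h0.
  by have -> : Ordinal hwn = r0 by apply: val_inj => /=; lia.
apply: (connect_trans (y := parO (Ordinal hwn))).
  by apply: IH => /=; have := parN_lt h0; lia.
by apply: connect1; rewrite /T /eN /= h0 eqxx.
Qed.

Lemma card_edges_T (Q : pred ('I_n * 'I_n)) :
  #|[set p | is_edge T p && Q p]| = #|[set v : 'I_n | (0 < val v) && Q (parO v, v)]|.
Proof.
have -> : [set p | is_edge T p && Q p] =
    (fun v => (parO v, v)) @: [set v : 'I_n | (0 < val v) && Q (parO v, v)].
  apply/setP => [[a b]]; rewrite inE is_edge_T /=; apply/idP/imsetP.
    case/andP => /andP [hb /eqP ha] hq.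
    have E : parO b = a by apply: val_inj.
    exists b; last by rewrite E.
    by rewrite inE E; apply/andP; split.
  move=> [v]; rewrite inE => /andP [hv hq] [-> ->] /=; by rewrite hv eqxx.
by rewrite card_in_imset // => x y _ _ [].
Qed.

Lemma T_edges : num_edges T = n.-1.
Proof.
rewrite /num_edges.
have -> : [set p | is_edge T p] = [set p | is_edge T p && true].
  by apply/setP => p; rewrite !inE andbT.
rewrite card_edges_T.
have -> : [set v : 'I_n | (0 < val v) && true] = [set v : 'I_n | 0 < val v] by apply/setP => v; rewrite !inE andbT.
rewrite card_ord_count -(prednK (leq_trans (isT : 0 < 13) hn)).
rewrite /= add0n.
set k := n.-1.
rewrite -[RHS](size_iota 1 k) -count_predT; apply: eq_in_count => x.
by rewrite mem_iota => /andP [h _].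
Qed.

Lemma deg_T (v : 'I_n) : deg T v = dT n v.
Proof.
move: v => [v hvn]; rewrite /deg /T card_ord_count /=.
case: (leqP 12 v) => hv.
  have E : eN v =1 predU (pred1 v.+1) (pred1 v.-1).
    move=> u; rewrite /eN /= (parN_big hv).
    case: (leqP 12 u) => hu.
      rewrite (parN_big hu); apply/idP/idP.
      case/orP => /andP [h1 /eqP h2]; apply/orP; lia.
      case/orP => /eqP ->; apply/orP; [left|right]; lia.
    have : parN u <= u by apply: parN_le.
    move=> hpu; apply/idP/idP.
      case/orP => /andP [h1 /eqP h2]; lia.
    case/orP => /eqP h; lia.
  rewrite (eq_count E).
  have := count_predUI (pred1 v.+1) (pred1 v.-1) (iota 0 n).
  have -> : count (predI (pred1 v.+1) (pred1 v.-1)) (iota 0 n) = 0.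
    apply/eqP; rewrite -leqn0 leqNgt -has_count; apply/hasPn => u _ /=.
    by apply/negP => /andP [/eqP -> /eqP]; lia.
  rewrite addn0 => ->.
  rewrite !count_uniq_mem ?iota_uniq // !mem_iota /dT !inE.
  rewrite add0n; case: ifP => h1; first lia.
  case: ifP => h2; first lia.
  case: ifP => h3; move: h3.
    move=> /andP [_ /eqP h3]; rewrite h3 ltnn /=; lia.
  move=> /negbT; rewrite negb_and ltnNge => /orP [h4|/eqP h4]; first lia.
  have : v.+1 < n by lia.
  by move=> ->; rewrite (_ : v.-1 < n) //; lia.
rewrite count_split13 //; last first.
  move=> u hu; rewrite /eN (parN_big (leq_trans (isT : 12 <= 13) hu)).
  apply/negP => /orP [] /andP [h1 /eqP h2]; have := parN_le v; lia.
rewrite /dT.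
do 12! [case: v hv hvn => [|v] hv hvn; first by []].
lia.
Qed.

End Tcons.


Section Tfacts.
Variable n : nat.
Hypothesis hn : 13 <= n.
Let degT := @deg_T n hn.
Let cardE := @card_edges_T n hn.

Lemma T_deg3 (v : 'I_n) : deg (T n) v <= 3.
Proof. rewrite degT /dT; case: ifP => //; case: ifP => //; by case: ifP. Qed.

Lemma T_tree : is_tree (T n).
Proof.
split; [split; [exact: (@T_sym n) | exact: (@T_irr n)] | split].
  exact: (@T_conn n hn).
exact: (@T_edges n hn).
Qed.

Lemma T_nd3 : num_deg (T n) 3 = 3.
Proof.
rewrite /num_deg.
have -> : [set v | deg (T n) v == 3] = [set v : 'I_n | val v \in [:: 2; 5; 8]].
  by apply/setP => v; rewrite !inE degT dT3 !inE.
rewrite card_ord_count count_split13 //.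
by move=> u hu /=; rewrite orbF; lia.
Qed.

Lemma T_m33 : medges (T n) 3 3 = 2.
Proof.
rewrite /medges.
have -> : [set p | is_edge (T n) p && ((deg (T n) p.1 == 3) && (deg (T n) p.2 == 3)
            || (deg (T n) p.1 == 3) && (deg (T n) p.2 == 3))] =
          [set p | is_edge (T n) p && ((val p.1 \in [:: 2; 5; 8]) && (val p.2 \in [:: 2; 5; 8]))].
  by apply/setP => p; rewrite !inE !degT (dT3 n p.1) (dT3 n p.2) !inE orbb.
rewrite (cardE (fun p => (val p.1 \in [:: 2; 5; 8]) && (val p.2 \in [:: 2; 5; 8]))) /=.
etransitivity.
  exact: (card_ord_count n (fun v => (0 < v) && ((parN v \in [:: 2; 5; 8]) && (v \in [:: 2; 5; 8])))).
rewrite count_split13 //.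
by move=> u hu /=; rewrite !inE; apply/negP => /andP [_ /andP [_]]; lia.
Qed.

Lemma T_m13 : medges (T n) 1 3 = 0.
Proof.
rewrite /medges.
have -> : [set p | is_edge (T n) p && ((deg (T n) p.1 == 1) && (deg (T n) p.2 == 3)
            || (deg (T n) p.1 == 3) && (deg (T n) p.2 == 1))] =
          [set p | is_edge (T n) p && ((dT n p.1 == 1) && (val p.2 \in [:: 2; 5; 8])
            || (val p.1 \in [:: 2; 5; 8]) && (dT n p.2 == 1))].
  by apply/setP => p; rewrite !inE !degT (dT3 n p.1) (dT3 n p.2) ?inE.
rewrite (cardE (fun p => (dT n p.1 == 1) && (val p.2 \in [:: 2; 5; 8])
            || (val p.1 \in [:: 2; 5; 8]) && (dT n p.2 == 1))) /=.
etransitivity.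
  exact: (card_ord_count n (fun v => (0 < v) && ((dT n (parN v) == 1) && (v \in [:: 2; 5; 8])
            || (parN v \in [:: 2; 5; 8]) && (dT n v == 1)))).
rewrite count_split13 //.
move=> u hu; apply/negP => /andP [_] /orP [] /andP [].
  by rewrite !inE; lia.
rewrite parN_big; last by lia.
by rewrite !inE; lia.
Qed.

End Tfacts.

Local Open Scope ring_scope.

Lemma final_ineq (R : realFieldType) (c12 c13 c22 c23 c33 : R)
  (k m12 m13 m22 m23 m33 N : nat) :
  let A := c12 - 4 * c22 + 3 * c23 in
  let h13 := c13 - c12 + c22 - c23 in
  let h33 := c22 - 2 * c23 + c33 in
  0 < A + h33 -> 0 < h13 -> h33 < 0 ->
  (m12 + m13 = k + 2)%N -> (m13 + m23 + 2 * m33 = 3 * k)%N ->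
  (m12 + m13 + m22 + m23 + m33 + 1 = N)%N -> (13 <= N)%N -> (3 <= k)%N ->
  (m33 + 1 <= k)%N -> ~ (k = 3 /\ m13 = 0 /\ m33 = 2)%N ->
  c12 *+ 5 + c22 *+ (N - 13) + c23 *+ 5 + c33 *+ 2 <
  c12 *+ m12 + c13 *+ m13 + c22 *+ m22 + c23 *+ m23 + c33 *+ m33.
Proof.
move=> A h13 h33 hA h1 h3 e1 e3 e5 hN hk hm hnot.
have F1 := congr1 (fun x => x%:R : R) e1; rewrite /= !natrD in F1.
have F3 := congr1 (fun x => x%:R : R) e3; rewrite /= ?natrD ?natrM in F3. move: F3. rewrite ?natrD ?natrM => F3.
have F5 := congr1 (fun x => x%:R : R) e5; rewrite /= !natrD in F5.
have E12 : m12%:R = k%:R + 2 - m13%:R :> R by lra.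
have E23 : m23%:R = 3 * k%:R - m13%:R - 2 * m33%:R :> R by lra.
have E22 : m22%:R = N%:R - 1 - m12%:R - m13%:R - m23%:R - m33%:R :> R by lra.
have EN : (N - 13)%:R = N%:R - 13 :> R by rewrite natrB.
rewrite -!(mulr_natr c12) -!(mulr_natr c13) -!(mulr_natr c22) -!(mulr_natr c23) -!(mulr_natr c33) EN E22 E12 E23.
set K := k%:R; set M13 := m13%:R; set M33 := m33%:R; set NN := N%:R.
rewrite -subr_gt0.
apply: (@lt_le_trans _ _ ((K - 3) * A + M13 * h13 + (M33 - 2) * h33)); last first.
  rewrite le_eqVlt; apply/orP; left; apply/eqP; rewrite /A /h13 /h33; ring.
clear E12 E23 E22 EN F1 F3 F5.
have hM13 : 0 <= M13 by rewrite ler0n.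
have hM33 : 0 <= M33 by rewrite ler0n.
have hKM : M33 + 1 <= K by rewrite /M33 /K natr1 ler_nat -addn1.
have p1 : 0 <= M13 * h13 by apply: mulr_ge0 => //; apply: ltW.
case: (leqP 4 k) => hk4.
  have hK : 4 <= K by rewrite /K (ler_nat R 4 k).
  have p2 : 0 <= ((K - 3) - (M33 - 2)) * (- h33) by apply: mulr_ge0; lra.
  have p3 : 0 <= (K - 4) * (A + h33) by apply: mulr_ge0; lra.
  have : (K - 3) * A + M13 * h13 + (M33 - 2) * h33 =
    M13 * h13 + ((K - 3) - (M33 - 2)) * (- h33) + (K - 4) * (A + h33) + (A + h33) by ring.
  move=> ->.
  move: p1 p2 p3 hA; generalize (M13 * h13) (((K - 3) - (M33 - 2)) * (- h33)) ((K - 4) * (A + h33)) (A + h33).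
  move=> a b c d; lra.
have hk3 : k = 3%N by lia.
have hK : K = 3 by rewrite /K hk3.
rewrite hK subrr mul0r add0r.
case: (leqP m33 1) => hm33.
  have hM : M33 <= 1 by rewrite /M33 (ler_nat R m33 1).
  have p2 : 0 <= (1 - M33) * (- h33) by apply: mulr_ge0; lra.
  have : M13 * h13 + (M33 - 2) * h33 = M13 * h13 + (1 - M33) * (- h33) + (- h33) by ring.
  move=> ->.
  move: p1 p2 h3; generalize (M13 * h13) ((1 - M33) * (- h33)) h33.
  move=> a b c; lra.
have hm2 : m33 = 2%N by lia.
have hm13 : (1 <= m13)%N by move: hnot; rewrite hm2 hk3; lia.
have hM : 1 <= M13 by rewrite /M13 (ler_nat R 1 m13).
have -> : M33 = 2 by rewrite /M33 hm2.
rewrite subrr mul0r addr0.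
by apply: mulr_gt0 => //; lra.
Qed.

Lemma sqb (R : rcfType) (c lo hi : R) : 0 <= c -> 0 <= lo -> 0 <= hi ->
  lo ^+ 2 <= c * ((100 * 100) * (100 * 100)) -> c * ((100 * 100) * (100 * 100)) <= hi ^+ 2 ->
  lo <= (100 * 100) * Num.sqrt c /\ (100 * 100) * Num.sqrt c <= hi.
Proof.
move=> hc hlo hhi h1 h2.
have hs := sqrtr_ge0 c.
have hs2 := sqr_sqrtr hc.
set s := Num.sqrt c in hs hs2 *.
split; nra.
Qed.

Lemma b1 (R : rcfType) : (100 * 100 + 0) <= (100 * 100) * Num.sqrt (1 : R) /\ (100 * 100) * Num.sqrt (1 : R) <= (100 * 100 + 0).
Proof. apply: sqb; lra. Qed.

Lemma b2 (R : rcfType) : (141 * 100 + 42) <= (100 * 100) * Num.sqrt (2 : R) /\ (100 * 100) * Num.sqrt (2 : R) <= (141 * 100 + 43).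
Proof. apply: sqb; lra. Qed.

Lemma b4 (R : rcfType) : (200 * 100 + 0) <= (100 * 100) * Num.sqrt (4 : R) /\ (100 * 100) * Num.sqrt (4 : R) <= (200 * 100 + 0).
Proof. apply: sqb; lra. Qed.

Lemma b5 (R : rcfType) : (223 * 100 + 60) <= (100 * 100) * Num.sqrt (5 : R) /\ (100 * 100) * Num.sqrt (5 : R) <= (223 * 100 + 61).
Proof. apply: sqb; lra. Qed.

Lemma b8 (R : rcfType) : (282 * 100 + 84) <= (100 * 100) * Num.sqrt (8 : R) /\ (100 * 100) * Num.sqrt (8 : R) <= (282 * 100 + 85).
Proof. apply: sqb; lra. Qed.

Lemma b10 (R : rcfType) : (316 * 100 + 22) <= (100 * 100) * Num.sqrt (10 : R) /\ (100 * 100) * Num.sqrt (10 : R) <= (316 * 100 + 23).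
Proof. apply: sqb; lra. Qed.

Lemma b13 (R : rcfType) : (360 * 100 + 55) <= (100 * 100) * Num.sqrt (13 : R) /\ (100 * 100) * Num.sqrt (13 : R) <= (360 * 100 + 56).
Proof. apply: sqb; lra. Qed.

Lemma b18 (R : rcfType) : (424 * 100 + 26) <= (100 * 100) * Num.sqrt (18 : R) /\ (100 * 100) * Num.sqrt (18 : R) <= (424 * 100 + 27).
Proof. apply: sqb; lra. Qed.

Lemma SO_formula (R : realType) n (e : rel 'I_n) :
  (forall v, (1 <= deg e v <= 3)%N) -> medges e 1 1 = 0%N ->
  SO R e = Num.sqrt 5 *+ medges e 1 2 + Num.sqrt 10 *+ medges e 1 3 +
    Num.sqrt 8 *+ medges e 2 2 + Num.sqrt 13 *+ medges e 2 3 + Num.sqrt 18 *+ medges e 3 3.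
Proof.
move=> hd h11.
rewrite /SO (@edge_sum n e hd R (fun a b => Num.sqrt (a%:R ^+ 2 + b%:R ^+ 2))); last first.
  by move=> i j; rewrite addrC.
rewrite h11 mulr0n add0r.
rewrite ?natn.
congr (_ + _ + _ + _ + _); congr (_ *+ _); congr Num.sqrt.
all: ring.
Qed.

Lemma SOred_formula (R : realType) n (e : rel 'I_n) :
  (forall v, (1 <= deg e v <= 3)%N) -> medges e 1 1 = 0%N ->
  SO_red R e = Num.sqrt 1 *+ medges e 1 2 + Num.sqrt 4 *+ medges e 1 3 +
    Num.sqrt 2 *+ medges e 2 2 + Num.sqrt 5 *+ medges e 2 3 + Num.sqrt 8 *+ medges e 3 3.
Proof.
move=> hd h11.
rewrite /SO_red (@edge_sum n e hd R (fun a b => Num.sqrt ((a%:R - 1) ^+ 2 + (b%:R - 1) ^+ 2))); last first.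
  by move=> i j; rewrite addrC.
rewrite h11 mulr0n add0r ?natn.
congr (_ + _ + _ + _ + _); congr (_ *+ _); congr Num.sqrt.
all: ring.
Qed.

Theorem theorem3p2 (R : realType) (n : nat) (Tstar : rel 'I_n) :
  (13 <= n)%N ->
  chemical_tree Tstar ->
  max_deg Tstar = 3%N ->
  (3 <= num_deg Tstar 3)%N ->
  ~ in_Omega Tstar ->
  exists T : rel 'I_n,
    in_Omega T /\ SO R T < SO R Tstar /\ SO_red R T < SO_red R Tstar.
Proof.
move=> hn hchem hmax hk hnot.
have hn2 : (2 < n)%N by lia.
case: (hchem) => htree hdeg4.
have hdeg3 : forall v, (deg Tstar v <= 3)%N.
  move=> v; rewrite -hmax /max_deg; exact: (leq_bigmax (F := fun v => deg Tstar v) v).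
have [h11 i1 i2 i3 [i5 i6]] := @tree_ids n Tstar hn2 htree hdeg3.
have hd := @hdeg n Tstar hn2 htree hdeg3.
case: (htree) => [[hsym hirr] [hconn hedges]].
have hm33 : (medges Tstar 3 3 < num_deg Tstar 3)%N.
  set S := [set v | deg Tstar v == 3%N].
  have : (0 < #|S|)%N by move: hk; rewrite /num_deg -/S; lia.
  case/card_gt0P => r hr.
  have := @forest_bound n Tstar hsym hirr hconn hedges r S hr.
  have -> : medges Tstar 3 3 = #|[set p | is_edge Tstar p && (p.1 \in S) && (p.2 \in S)]|.
    rewrite /medges; apply: eq_card => p; by rewrite !inE orbb andbA.
  done.
have hT := @T_tree n hn.
have hT3 := @T_deg3 n hn.
have [t11 t1 t2 t3 [t5 t6]] := @tree_ids n (T n) hn2 hT hT3.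
have hdT := @hdeg n (T n) hn2 hT hT3.
have Tom : in_Omega (T n).
  split; first by split => // v; exact: leq_trans (hT3 v) _.
  move: t1 t2 t3 t5 t6; rewrite (@T_nd3 n hn) (@T_m13 n hn) (@T_m33 n hn) => t1 t2 t3 t5 t6.
  repeat split; lia.
exists (T n); split => //.
case: Tom => _ [_ [_ [_ [a12 [a23 [a13 [a33 a22]]]]]]].
have nat1 : (medges Tstar 1 2 + medges Tstar 1 3 = num_deg Tstar 3 + 2)%N by lia.
have nat3 := i3.
have nat5 : (medges Tstar 1 2 + medges Tstar 1 3 + medges Tstar 2 2 + medges Tstar 2 3 + medges Tstar 3 3 + 1 = n)%N by lia.
have natm : (medges Tstar 3 3 + 1 <= num_deg Tstar 3)%N by lia.
have natnot : ~ (num_deg Tstar 3 = 3 /\ medges Tstar 1 3 = 0 /\ medges Tstar 3 3 = 2)%N.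
  move=> [k3 [m13 m33]]; apply: hnot; split => //.
  repeat split; lia.
have [l5 u5] := b5 R. have [l8 u8] := b8 R. have [l10 u10] := b10 R.
have [l13 u13] := b13 R. have [l18 u18] := b18 R. have [l1 u1] := b1 R.
have [l2 u2] := b2 R. have [l4 u4] := b4 R.
split.
  rewrite !SO_formula // a12 a23 a13 a33 a22 mulr0n addr0.
  apply: (@final_ineq R _ _ _ _ _ (num_deg Tstar 3) _ _ _ _ _ n) => //; lra.
rewrite !SOred_formula // a12 a23 a13 a33 a22 mulr0n addr0.
apply: (@final_ineq R _ _ _ _ _ (num_deg Tstar 3) _ _ _ _ _ n) => //; lra.
Qed.
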